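(* In the free-group setting described in the context, the map $\pi_Y\circ\pi_f:X_f\to Y$ is not open.
   Context: Let $r\ge2$ and $\Gamma=F_r$ free on $S=\{a,b,a_3,\dots,a_r\}$. $Y$ is the Gromov boundary (infinite reduced words in $S\cup S^{-1}$, $\Gamma$ acting by concatenation and cancellation). For nontrivial $s\in\Gamma$, $y\in Y$ starts with $s$ if $y=sy'$ with the last letter of $s$ not inverse to the first letter of $y'$; $V_s$ is the set of such $y$; $a^\infty$ is the constant word $a$. Let $\{\Gamma_n\}$ be strictly decreasing finite-index normal subgroups with trivial intersection, $Z=\varprojlim\Gamma/\Gamma_n$ with left translation, $\pi_n:Z\to\Gamma/\Gamma_n$, $X=Y\times Z$ with product action, $\pi_Y:X\to Y$ the projection. For $n\ge2$ choose $\gamma_n\in\Gamma_{n-1}\setminus\Gamma_n$; $u_n=a^nba^{-n}b^{-1}$, $D_n=V_{u_n}$, $C_n=\pi_n^{-1}(\gamma_n\Gamma_n)$, $X_+=\bigcup_{n\ge2}D_n\times C_n$, $X_-=X\setminus(X_+\cup\{(a^\infty,e_\Gamma)\})$, $f=\pm1$ on $X_\pm$. $\pi_f:X_f\to X$ is the McMahon extension: the (unique up to conjugacy) minimal continuous action on a compact metrizable space with equivariant continuous surjection whose fibers are single points off $\Gamma(a^\infty,e_\Gamma)$ and two points on it, such that $f\circ\pi_f$ extends continuously to $X_f$. *)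

(* Defs.v *)
From HB Require Import structures.
From mathcomp Require Import all_boot all_order all_algebra.
From mathcomp Require Import all_classical all_reals.
From mathcomp Require Import topology.
From mathcomp Require Import Rstruct Rstruct_topology.
From Stdlib Require Rdefinitions.

Set Implicit Arguments.
Unset Strict Implicit.
Unset Printing Implicit Defensive.

Import Order.TTheory GRing.Theory Num.Theory.
Local Open Scope classical_set_scope.


(* A letter (i, true) stands for a_{i+1}, (i, false) for a_{i+1}^{-1}; *)

Definition letter := (nat * bool)%type.

Definition linv (x : letter) : letter := (x.1, ~~ x.2).

Definition valid_letter (r : nat) (x : letter) : bool := (x.1 < r)%N.

Definition la : letter := (0%N, true).
Definition lb : letter := (1%N, true).

Definition reduced (w : seq letter) : bool :=
  sorted (fun x y => y != linv x) w.

Definition Grp (r : nat) : set (seq letter) :=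
  [set g | all (valid_letter r) g && reduced g].

Definition pushL (x : letter) (w : seq letter) : seq letter :=
  match w with
  | y :: w' => if y == linv x then w' else x :: w
  | [::] => [:: x]
  end.

Definition gmul (g h : seq letter) : seq letter := foldr pushL h g.
Definition ginv (g : seq letter) : seq letter := rev (map linv g).
Definition gone : seq letter := [::].

Definition Yset (r : nat) : set (nat -> letter) :=
  [set y | (forall n, valid_letter r (y n)) /\ (forall n, y n.+1 != linv (y n))].

Definition actL (x : letter) (y : nat -> letter) : nat -> letter :=
  if y 0%N == linv x then (fun n => y n.+1)
  else (fun n => if n is n'.+1 then y n' else x).

Definition actY (g : seq letter) (y : nat -> letter) : nat -> letter :=
  foldr actL y g.

Definition catY (s : seq letter) (y : nat -> letter) : nat -> letter :=
  fun n => if (n < size s)%N then nth la s n else y (n - size s)%N.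

Definition Vs (r : nat) (s : seq letter) : set (nat -> letter) :=
  [set y | Yset r y /\ exists y', [/\ Yset r y', y = catY s y'
                                    & y' 0%N != linv (last la s)]].

Definition openY (r : nat) (A : set (nat -> letter)) : Prop :=
  A `<=` Yset r /\
  forall y, A y -> exists s, [/\ Grp r s, s != gone, Vs r s y & Vs r s `<=` A].

Definition ainf : nat -> letter := fun _ => la.

Definition lcoset (g : seq letter) (H : set (seq letter)) : set (seq letter) :=
  [set gmul g h | h in H].

Definition is_subgroup (r : nat) (H : set (seq letter)) : Prop :=
  [/\ H `<=` Grp r, H gone,
      (forall g h, H g -> H h -> H (gmul g h)) & (forall g, H g -> H (ginv g))].

Definition is_normal (r : nat) (H : set (seq letter)) : Prop :=
  forall g h, Grp r g -> H h -> H (gmul (gmul g h) (ginv g)).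

Definition finite_index (r : nat) (H : set (seq letter)) : Prop :=
  finite_set [set lcoset g H | g in Grp r].

(* (Gamma_n)_{n >= 1}: strictly decreasing finite-index normal subgroups
   with trivial intersection (the value Gam 0 is irrelevant/unused) *)
Definition good_chain (r : nat) (Gam : nat -> set (seq letter)) : Prop :=
  [/\ (forall n, (0 < n)%N ->
         [/\ is_subgroup r (Gam n), is_normal r (Gam n) & finite_index r (Gam n)]),
      (forall n, (0 < n)%N -> Gam n.+1 `<` Gam n)
    & (forall g, (forall n, (0 < n)%N -> Gam n g) -> g = gone)].

(* Z = inverse limit of Gamma/Gamma_n (n >= 1): compatible sequences of left
   cosets; the coordinate 0 is normalised to the whole group *)
Definition Zset (r : nat) (Gam : nat -> set (seq letter))
  : set (nat -> set (seq letter)) :=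
  [set z | [/\ z 0%N = Grp r,
              (forall n, (0 < n)%N -> exists2 g, Grp r g & z n = lcoset g (Gam n))
            & (forall n, (0 < n)%N -> z n.+1 `<=` z n)]].

Definition zE (r : nat) (Gam : nat -> set (seq letter)) : nat -> set (seq letter) :=
  fun n => if n is 0%N then Grp r else Gam n.

Definition actZ (g : seq letter) (z : nat -> set (seq letter))
  : nat -> set (seq letter) :=
  fun n => [set gmul g h | h in z n].

Definition Cyl (r : nat) (Gam : nat -> set (seq letter)) (n : nat)
  (z : nat -> set (seq letter)) : set (nat -> set (seq letter)) :=
  [set z' | Zset r Gam z' /\ z' n = z n].

Definition pt := ((nat -> letter) * (nat -> set (seq letter)))%type.

Definition Xset (r : nat) (Gam : nat -> set (seq letter)) : set pt :=
  Yset r `*` Zset r Gam.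

Definition actX (g : seq letter) (p : pt) : pt := (actY g p.1, actZ g p.2).

Definition openX (r : nat) (Gam : nat -> set (seq letter)) (W : set pt) : Prop :=
  W `<=` Xset r Gam /\
  forall p, W p -> exists s n,
    [/\ Grp r s, s != gone, (0 < n)%N, Vs r s p.1 &
        Vs r s `*` Cyl r Gam n p.2 `<=` W].

Definition piY (p : pt) : nat -> letter := p.1.

Definition pt0 (r : nat) (Gam : nat -> set (seq letter)) : pt := (ainf, zE r Gam).

Definition orbit0 (r : nat) (Gam : nat -> set (seq letter)) : set pt :=
  [set actX g (pt0 r Gam) | g in Grp r].

Definition u_ (n : nat) : seq letter :=
  nseq n la ++ lb :: nseq n (linv la) ++ [:: linv lb].

Definition D_ (r : nat) (n : nat) : set (nat -> letter) := Vs r (u_ n).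

Definition C_ (r : nat) (Gam : nat -> set (seq letter)) (gam : nat -> seq letter)
  (n : nat) : set (nat -> set (seq letter)) :=
  [set z | Zset r Gam z /\ z n = lcoset (gam n) (Gam n)].

Definition Xplus r Gam gam : set pt :=
  \bigcup_(n in [set n | (2 <= n)%N]) (D_ r n `*` C_ r Gam gam n).

Definition Xminus r Gam gam : set pt :=
  Xset r Gam `\` (Xplus r Gam gam `|` [set pt0 r Gam]).

Definition cont_action (r : nat) (Xf : topologicalType)
  (actf : seq letter -> Xf -> Xf) : Prop :=
  [/\ actf gone = id,
      (forall g h, Grp r g -> Grp r h -> actf (gmul g h) = actf g \o actf h)
    & (forall g, Grp r g -> continuous (actf g))].

Definition minimal_action (r : nat) (Xf : topologicalType)
  (actf : seq letter -> Xf -> Xf) : Prop :=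
  forall A : set Xf, closed A ->
    (forall g x, Grp r g -> A x -> A (actf g x)) -> A = set0 \/ A = setT.

Definition McMahon_ext (r : nat) (Gam : nat -> set (seq letter))
  (gam : nat -> seq letter) (Xf : pseudoMetricType Rdefinitions.R)
  (actf : seq letter -> Xf -> Xf) (pif : Xf -> pt) : Prop :=
  [/\ [/\ hausdorff_space Xf, compact [set: Xf],
          cont_action r actf & minimal_action r actf],
      [/\ forall x, Xset r Gam (pif x),
          Xset r Gam `<=` range pif,
          (forall W, openX r Gam W -> open (pif @^-1` W))
        & (forall g x, Grp r g -> pif (actf g x) = actX g (pif x))],
      (forall p, Xset r Gam p -> orbit0 r Gam p ->
         exists x1 x2, x1 != x2 /\ pif @^-1` [set p] = [set x1; x2]),
      (forall p, Xset r Gam p -> ~ orbit0 r Gam p ->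
         exists x, pif @^-1` [set p] = [set x]) &
      exists F : Xf -> Rdefinitions.R, [/\ continuous F,
         (forall x, Xplus r Gam gam (pif x) -> F x = 1%R) &
         (forall x, Xminus r Gam gam (pif x) -> F x = (-1)%R)]].

(* Main.v *)
Require Import Defs.
From HB Require Import structures.
From mathcomp Require Import all_boot all_order all_algebra.
From mathcomp Require Import all_classical all_reals.
From mathcomp Require Import topology normedtype.
From mathcomp Require Import Rstruct Rstruct_topology.
From mathcomp Require Import zify.
From Stdlib Require Rdefinitions.
Import Order.TTheory GRing.Theory Num.Theory.
Local Open Scope classical_set_scope.

Lemma catY_lt s y k : (k < size s)%N -> catY s y k = nth la s k.
Proof. by rewrite /catY => ->. Qed.

Lemma catY_ge s y k : (size s <= k)%N -> catY s y k = y (k - size s)%N.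
Proof. by rewrite /catY leqNgt => /negbTE ->. Qed.

Lemma Yset_catY r s y' : all (valid_letter r) s -> reduced s -> Yset r y' ->
  y' 0%N != linv (last la s) -> Yset r (catY s y').
Proof.
move=> vs rs [vy ry] hc; split=> n.
  case: (ltnP n (size s)) => h.
    by rewrite catY_lt //; apply: (allP vs); apply: mem_nth.
  by rewrite catY_ge.
case: (ltnP n.+1 (size s)) => h1.
  rewrite !catY_lt ?(ltnW h1) //.
  move: rs h1; rewrite /reduced; case: s {vs hc} => [|x p] //= /pathP => hp h1.
  have := hp la n h1. by case: n h1 => [|n] h1 //=.
case: (ltnP n (size s)) => h2.
  have en : n.+1 = size s by apply/eqP; rewrite eqn_leq h1 h2.
  rewrite catY_ge // catY_lt // -en subnn.
  have -> : n = (size s).-1 by rewrite -en.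
  by rewrite nth_last.
rewrite !catY_ge ?(leq_trans h2) // subSn //.
Qed.

Lemma path_mk r (y : nat -> letter) : Yset r y -> forall k m,
  path (fun x z => z != linv x) (y m) (map y (iota m.+1 k)).
Proof.
move=> [_ ry]; elim=> [|k IH] m //=.
by rewrite ry IH.
Qed.

Lemma prefix_Grp r y k : Yset r y -> Grp r (mkseq y k.+1).
Proof.
move=> hy; rewrite /Grp /mkseq; apply/andP; split.
  by rewrite all_map; apply/allP => i _ /=; case: hy.
by rewrite /reduced /= -/(iota 1 k); apply: path_mk hy k 0.
Qed.

Lemma prefix_Vs r y k : Yset r y -> Vs r (mkseq y k.+1) y.
Proof.
move=> hy; split=> //; exists (fun j => y (j + k.+1)%N); split.
- case: hy => vy ry; split=> n //. by rewrite addSn ry.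
- apply: funext => n; rewrite /catY size_mkseq.
  case: ltnP => h; first by rewrite nth_mkseq.
  by rewrite subnK.
- rewrite -nth_last size_mkseq nth_mkseq //=.
  by case: hy => _ ry; rewrite add0n ry.
Qed.

Lemma path_nseq (e : rel letter) x m : e x x -> path e x (nseq m x).
Proof. by move=> h; elim: m => //= m ->; rewrite h. Qed.

Lemma last_nseq (x : letter) m : last x (nseq m x) = x.
Proof. by elim: m. Qed.

Lemma u_reduced n : reduced (u_ n.+1).
Proof.
rewrite /reduced /u_ /=.
rewrite cat_path path_nseq //= last_nseq /=.
by rewrite cat_path path_nseq //= last_nseq.
Qed.

Lemma u_valid r n : (2 <= r)%N -> all (valid_letter r) (u_ n).
Proof.
move=> hr; rewrite /u_ all_cat /= all_cat /= !all_nseq /valid_letter /=.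
by rewrite hr (ltn_trans _ hr) ?orbT.
Qed.

Lemma u_size n : size (u_ n) = (n + (n + 2))%N.
Proof. by rewrite /u_ size_cat /= size_cat !size_nseq /= addn1 addn2. Qed.

Lemma u_nth_lt n k : (k < n)%N -> nth la (u_ n) k = la.
Proof. by move=> h; rewrite /u_ nth_cat size_nseq h nth_nseq h. Qed.

Lemma u_nth_S n : (0 < n)%N -> nth la (u_ n) n.+1 = linv la.
Proof.
move=> h; rewrite /u_ nth_cat size_nseq ltnNge leqnSn /= subSn // subnn /=.
by rewrite nth_cat size_nseq h nth_nseq h.
Qed.

Lemma u_last n : last la (u_ n) = linv lb.
Proof. by rewrite /u_ last_cat /= last_cat. Qed.

Theorem lemma5p4 (r : nat) (hr : (2 <= r)%N)
  (Gam : nat -> set (seq letter)) (hGam : good_chain r Gam)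
  (gam : nat -> seq letter)
  (hgam : forall n, (2 <= n)%N -> Gam n.-1 (gam n) /\ ~ Gam n (gam n))
  (Xf : pseudoMetricType Rdefinitions.R) (actf : seq letter -> Xf -> Xf) (pif : Xf -> pt)
  (hM : McMahon_ext r Gam gam actf pif) :
  ~ (forall U : set Xf, open U -> openY r ((piY \o pif) @` U)).
Proof.
move=> Hopen.
case: hM => [[_ hC _ _] [hX hsurj hcont _] _ _ [F [Fc Fp Fm]]].
case: hGam => [hsub hdec _].
pose z (n : nat) : nat -> set (seq letter) :=
  fun k => if k is 0%N then Grp r else lcoset (gam n) (Gam k).
have zC : forall n, (2 <= n)%N -> C_ r Gam gam n (z n).
  move=> n hn; split; last by rewrite /z; case: n hn.
  split=> //.
  - move=> k hk; exists (gam n); last by case: k hk.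
    have [h1 _] := hgam n hn.
    have hn1 : (0 < n.-1)%N by case: n hn {h1} => [|[|n]].
    have [[hs _ _ _] _ _] := hsub n.-1 hn1.
    exact: hs.
  - move=> k hk; case: k hk => // k _ /= w [h hh <-]; exists h => //.
    exact: (properW (hdec k.+1 isT)).
pose y (n : nat) := catY (u_ n) (fun _ => linv lb).
have cY : Yset r (fun _ : nat => linv lb).
  by split=> // n; rewrite /valid_letter /= (ltn_trans _ hr).
have yD : forall n, D_ r n.+1 (y n.+1).
  move=> n; split; last first.
    by exists (fun _ => linv lb); split => //; rewrite u_last.
  apply: Yset_catY => //; [exact: u_valid|exact: u_reduced|].
  by rewrite u_last.
have : forall n, exists x, pif x = (y n.+2, z n.+2).
  move=> n.
  have hXn : Xset r Gam (y n.+2, z n.+2).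
    split; first by case: (yD n.+1).
    by case: (zC n.+2 isT).
  have [x _ hx] := hsurj _ hXn; by exists x.
move=> /choice [xs hxs].
have Fxs : forall n, F (xs n) = 1%R.
  move=> n; apply: Fp; rewrite hxs; exists n.+2 => //.
  by split; [exact: yD | exact: zC].
have [x [_ hcl]] := hC (xs @ \oo) _ filterT.
have Fx : (0 < F x)%R.
  apply/negP => /negP hF.
  have hB : nbhs x (F @^-1` [set t | t < 1]%R).
    apply: open_nbhs_nbhs; split.
      by apply: open_comp; [move=> w _; exact: Fc | exact: open_lt].
    rewrite /= ltNge; apply: contra hF => h1.
    by apply: lt_le_trans h1.
  have hA : (xs @ \oo) (range xs) by exists 0%N => // n _; exists n.
  have [w [[n _ <-] /=]] := hcl _ _ hA hB.
  by rewrite Fxs ltxx.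
have hyx : (pif x).1 = ainf.
  apply: funext => k; apply/eqP; apply/negPn/negP => hk.
  set Y0 := (pif x).1.
  have hY0 : Yset r Y0 by case: (hX x).
  pose s := mkseq Y0 k.+1.
  pose W := Vs r s `*` Zset r Gam.
  have oW : openX r Gam W.
    split; first by move=> q [[hq _] hz]; split.
    move=> q [hq hz]; exists s, 1%N; split => //.
    - exact: prefix_Grp.
    - by move=> w [hw [hw2 _]]; split.
  have hB : nbhs x (pif @^-1` W).
    apply: open_nbhs_nbhs; split; first exact: hcont.
    by split; [exact: prefix_Vs | case: (hX x)].
  have hA : (xs @ \oo) [set xs n | n in [set n | (k <= n)%N]].
    by exists k => // n hn; exists n.
  have [w [[n hn <-] /=]] := hcl _ _ hA hB.
  rewrite /preimage /= hxs => -[[_ [y' [_ hyy _]]] _].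
  have := congr1 (fun f => f k) hyy.
  rewrite /y /= catY_lt ?u_size; last by rewrite (leq_trans _ (leq_addr _ _)) // ltnS (leq_trans hn).
  rewrite catY_lt ?size_mkseq // nth_mkseq // u_nth_lt; last by rewrite ltnS (leq_trans hn).
  by move=> h; move: hk; rewrite -/Y0 -h eqxx.
pose U := F @^-1` [set t | (0 < t)%R].
have oU : open U by apply: open_comp; [move=> w _; exact: Fc | exact: open_gt].
have [_ hO] := Hopen U oU.
have [s [gs sne [_ [y' [_ hcat _]]] sub]] := hO ainf (ex_intro2 _ _ x Fx hyx).
have sla : forall i, (i < size s)%N -> nth la s i = la.
  by move=> i hi; have := congr1 (fun f => f i) hcat; rewrite /= catY_lt.
have s0 : (0 < size s)%N by case: s sne {gs hcat sla sub}.
have lst : last la s = la by rewrite -nth_last sla // prednK.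
pose yy := catY s (fun _ => lb).
have cb : Yset r (fun _ : nat => lb).
  by split=> // n; rewrite /valid_letter /=.
have yyV : Vs r s yy.
  case/andP: gs => g1 g2.
  split; first by apply: Yset_catY => //; rewrite lst.
  by exists (fun _ => lb); split => //; rewrite lst.
have [x' Ux' hx0] := sub _ yyV.
have hx' : (pif x').1 = yy := hx0.
have hne : forall k, yy k != linv la.
  move=> k; rewrite /yy /catY; case: ifP => h //.
  by rewrite sla.
case: (pselect (Xplus r Gam gam (pif x'))) => hp.
  case: hp => n hn [[_ [y'' [_ hc _]]] _].
  have := congr1 (fun f => f n.+1) hc.
  have hn2 : (2 <= n)%N := hn.
  rewrite catY_lt; last by rewrite u_size; lia.
  rewrite u_nth_S; last by case: n hn2 {hn hc}.
  by rewrite /= hx' => h; move: (hne n.+1); rewrite h eqxx.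
case: (pselect (pif x' = pt0 r Gam)) => hq.
  have := congr1 (fun p => p.1 (size s)) hq.
  by rewrite /= hx' /yy catY_ge // subnn.
have : F x' = (-1)%R by apply: Fm; split; [exact: hX | move=> [] ].
move: Ux'; rewrite /U /= => h1 h2; move: h1; rewrite h2.
by rewrite ltr0N1.
Qed.
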